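(* Let $G=C_2\times C_2\times C_2=\langle n\rangle\times\langle b\rangle\times\langle c\rangle$ and $N=\langle n\rangle$. Let $U=\mathbb{Z}_2^{11}$ (column vectors) with $n,b,c$ acting by the following matrices $A_n,A_b,A_c$ respectively (rows listed top to bottom): $A_n$: (1,0,0,0,0,0,0,0,0,0,0); (0,1,0,0,0,0,0,0,0,0,0); (0,0,1,0,0,0,0,0,0,0,0); (0,0,0,1,0,0,0,0,0,0,0); (0,1,0,0,1,0,0,1,1,1,1); (0,1,0,0,0,1,0,1,1,1,1); (0,−1,0,0,0,0,1,−1,−1,−1,−1); (0,−1,0,0,0,0,0,−1,0,0,0); (0,0,−1,1,0,0,0,0,−1,0,0); (0,−1,1,0,0,0,0,0,0,−1,0); (0,0,0,−1,0,0,0,0,0,0,−1). $A_b$: (1,0,0,0,0,0,0,0,0,0,0); (0,1,0,0,0,0,0,0,0,0,0); (0,0,1,0,0,0,0,0,0,0,0); (0,0,0,1,0,0,0,0,0,0,0); (0,0,0,1,0,1,0,0,0,1,1); (0,1,−1,0,1,0,0,0,0,1,1); (1,0,1,−1,−1,−1,−1,0,0,−1,−1); (0,0,0,0,0,0,0,1,0,0,0); (0,0,0,0,0,0,0,0,1,0,0); (0,−1,1,0,0,0,0,0,0,−1,0); (0,0,0,−1,0,0,0,0,0,0,−1). $A_c$: (1,0,0,0,0,0,0,0,0,0,0); (0,1,0,0,0,0,0,0,0,0,0); (0,0,1,0,0,0,0,0,0,0,0); (0,0,0,1,0,0,0,0,0,0,0); (0,0,0,1,0,0,1,−1,0,−1,0);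 (1,1,0,0,−1,−1,−1,−1,0,−1,0); (0,0,0,−1,1,0,0,1,0,1,0); (0,0,0,0,0,0,0,1,0,0,0); (0,0,−1,1,0,0,0,0,−1,0,0); (0,0,0,0,0,0,0,0,0,1,0); (0,0,0,−1,0,0,0,0,0,0,−1). Then this defines a $\mathbb{Z}_2G$-lattice $U$ such that $U^N$ and $U_N$ are permutation $\mathbb{Z}_2[G/N]$-modules, but $U$ is not a permutation $\mathbb{Z}_2G$-module.
   Context: A $\mathbb{Z}_2G$-lattice is a $\mathbb{Z}_2G$-module free of finite rank over the $2$-adic integers $\mathbb{Z}_2$; it is a permutation module if it has a $\mathbb{Z}_2$-basis that is set-wise preserved by the group. For a module $U$, $U^N=\{u\in U:nu=u\}$ and $U_N=U/I_NU$, where $I_N$ is the augmentation ideal of $\mathbb{Z}_2N$ (so $U_N=U/(1-n)U$); both are $\mathbb{Z}_2[G/N]$-modules. *)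

(* Defs.v *)
From HB Require Import structures.
From mathcomp Require Import all_boot all_order all_algebra all_fingroup.
From mathcomp Require Import boolp.
Set Implicit Arguments. Unset Strict Implicit. Unset Printing Implicit Defensive.
Import GRing.Theory.

(* The ring Z_2 of 2-adic integers, as the inverse limit of the Z/2^k Z:    *)
(* an element is a coherent sequence of residues x_k in [0, 2^k) with       *)
(* x_{k+1} mod 2^k = x_k.                                                   *)
Record Z2 := MkZ2 {
  z2v : nat -> nat;
  z2lt : forall k, z2v k < 2 ^ k;
  z2coh : forall k, z2v k.+1 %% 2 ^ k = z2v k }.

HB.instance Definition _ := gen_eqMixin Z2.
HB.instance Definition _ := gen_choiceMixin Z2.

Lemma z2_inj (x y : Z2) : z2v x =1 z2v y -> x = y.
Proof.
case: x y => f fl fc [g gl gc] /= e.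
have efg : f = g by apply: funext.
subst g; congr MkZ2; exact: Prop_irrelevance.
Qed.

Section Z2mk.
Variable f : nat -> nat.
Hypothesis fcoh : forall k, f k.+1 = f k %[mod 2 ^ k].
Lemma z2mk_lt k : f k %% 2 ^ k < 2 ^ k.
Proof. by rewrite ltn_pmod // expn_gt0. Qed.
Lemma z2mk_coh k : f k.+1 %% 2 ^ k.+1 %% 2 ^ k = f k %% 2 ^ k.
Proof. by rewrite modn_dvdm ?dvdn_exp2l ?leqnSn // fcoh. Qed.
Definition z2mk : Z2 := @MkZ2 (fun k => f k %% 2 ^ k) z2mk_lt z2mk_coh.
End Z2mk.

Lemma z2_small (x : Z2) k : z2v x k %% 2 ^ k = z2v x k.
Proof. exact/modn_small/z2lt. Qed.

Definition z2zero : Z2 := @z2mk (fun _ => 0) (fun _ => erefl).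
Definition z2one : Z2 := @z2mk (fun _ => 1) (fun _ => erefl).

Lemma z2add_coh (x y : Z2) k :
  z2v x k.+1 + z2v y k.+1 = z2v x k + z2v y k %[mod 2 ^ k].
Proof. by rewrite -modnDm !z2coh. Qed.
Definition z2add (x y : Z2) : Z2 := @z2mk _ (z2add_coh x y).

Lemma z2mul_coh (x y : Z2) k :
  z2v x k.+1 * z2v y k.+1 = z2v x k * z2v y k %[mod 2 ^ k].
Proof. by rewrite -modnMm !z2coh. Qed.
Definition z2mul (x y : Z2) : Z2 := @z2mk _ (z2mul_coh x y).

Lemma z2opp_coh (x : Z2) k :
  2 ^ k.+1 - z2v x k.+1 = 2 ^ k - z2v x k %[mod 2 ^ k].
Proof.
apply/eqP; rewrite -(eqn_modDr (z2v x k.+1)).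
rewrite subnK ?(ltnW (z2lt x k.+1)) // -modnDmr z2coh.
by rewrite subnK ?(ltnW (z2lt x k)) // modnn expnS modnMl.
Qed.
Definition z2opp (x : Z2) : Z2 := @z2mk _ (z2opp_coh x).

Lemma z2addA : associative z2add.
Proof. by move=> x y z; apply: z2_inj => k /=; rewrite modnDml modnDmr addnA. Qed.
Lemma z2addC : commutative z2add.
Proof. by move=> x y; apply: z2_inj => k /=; rewrite addnC. Qed.
Lemma z2add0 : left_id z2zero z2add.
Proof. by move=> x; apply: z2_inj => k /=; rewrite mod0n add0n z2_small. Qed.
Lemma z2addN : left_inverse z2zero z2opp z2add.
Proof.
move=> x; apply: z2_inj => k /=.
by rewrite modnDml subnK ?(ltnW (z2lt x k)) // modnn mod0n.
Qed.

HB.instance Definition _ := GRing.isZmodule.Build Z2 z2addA z2addC z2add0 z2addN.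

Lemma z2mulA : associative z2mul.
Proof. by move=> x y z; apply: z2_inj => k /=; rewrite modnMml modnMmr mulnA. Qed.
Lemma z2mulC : commutative z2mul.
Proof. by move=> x y; apply: z2_inj => k /=; rewrite mulnC. Qed.
Lemma z2mul1 : left_id z2one z2mul.
Proof. by move=> x; apply: z2_inj => k /=; rewrite modnMml mul1n z2_small. Qed.
Lemma z2mulDl : left_distributive z2mul (@GRing.add Z2).
Proof.
by move=> x y z; apply: z2_inj => k /=; rewrite modnMml modnDm mulnDl.
Qed.
Lemma z2one_neq0 : z2one != (0%R : Z2).
Proof.
apply/eqP => e; have := congr1 (fun x => z2v x 1) e.
by rewrite /= /z2zero /=.
Qed.

HB.instance Definition _ :=
  GRing.Zmodule_isComNzRing.Build Z2 z2mulA z2mulC z2mul1 z2mulDl z2one_neq0.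

(* Lattices given by matrices.  A Z_2-lattice of rank r is Z_2^r (column    *)
(* vectors 'cV_r); a group element acts by left multiplication by a matrix. *)
Local Open Scope ring_scope.

Definition mx_of_rows (s : seq (seq int)) : 'M[Z2]_11 :=
  \matrix_(i < 11, j < 11) ((nth 0 (nth [::] s i) j)%:~R).

(* C_2 x C_2 x C_2 = <n> x <b> x <c> acts on Z_2^r through An, Ab, Ac:
   this is a group action iff the generators are commuting involutions. *)
Definition C2cube_action (r : nat) (An Ab Ac : 'M[Z2]_r) : Prop :=
  [/\ An *m An = 1%:M, Ab *m Ab = 1%:M & Ac *m Ac = 1%:M] /\
  [/\ An *m Ab = Ab *m An, An *m Ac = Ac *m An & Ab *m Ac = Ac *m Ab].

(* U = Z_2^r is a permutation Z_2G-module (G = <n,b,c>): there is a Z_2-basis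
   (the columns of an invertible matrix P) permuted by each generator. *)
Definition is_perm_module3 (r : nat) (An Ab Ac : 'M[Z2]_r) : Prop :=
  exists (P Q : 'M[Z2]_r) (sn sb sc : 'S_r),
    [/\ P *m Q = 1%:M, Q *m P = 1%:M,
        An *m P = P *m perm_mx sn, Ab *m P = P *m perm_mx sb
      & Ac *m P = P *m perm_mx sc].

(* U^N (N = <n>) is a permutation Z_2[G/N]-module (G/N generated by the
   images of b, c): there is a permutation Z_2[G/N]-module Z_2^m (b, c acting
   by permutation matrices) and a G/N-equivariant Z_2-linear isomorphism psi
   from Z_2^m onto U^N = {u | An u = u}. *)
Definition fixed_is_perm (r : nat) (An Ab Ac : 'M[Z2]_r) : Prop :=
  exists (m : nat) (psi : 'M[Z2]_(r, m)) (sb sc : 'S_m),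
    [/\ forall v : 'cV[Z2]_m, psi *m v = 0 -> v = 0,
        forall u : 'cV[Z2]_r, (An *m u = u <-> exists v, u = psi *m v),
        Ab *m psi = psi *m perm_mx sb
      & Ac *m psi = psi *m perm_mx sc].

(* U_N = U / I_N U = U / (1 - n)U is a permutation Z_2[G/N]-module: there is
   a permutation Z_2[G/N]-module Z_2^m and a surjective G/N-equivariant
   Z_2-linear map phi : U -> Z_2^m whose kernel is exactly (1 - n)U
   (so phi induces an isomorphism U_N ~= Z_2^m). *)
Definition coinv_is_perm (r : nat) (An Ab Ac : 'M[Z2]_r) : Prop :=
  exists (m : nat) (phi : 'M[Z2]_(m, r)) (sb sc : 'S_m),
    [/\ (forall v : 'cV[Z2]_m, exists u, phi *m u = v),
        forall u : 'cV[Z2]_r,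
          (phi *m u = 0 <-> exists w, u = (1%:M - An) *m w),
        phi *m Ab = perm_mx sb *m phi
      & phi *m Ac = perm_mx sc *m phi].

Definition A_n : 'M[Z2]_11 := mx_of_rows
  [:: [:: 1;0;0;0;0;0;0;0;0;0;0];
      [:: 0;1;0;0;0;0;0;0;0;0;0];
      [:: 0;0;1;0;0;0;0;0;0;0;0];
      [:: 0;0;0;1;0;0;0;0;0;0;0];
      [:: 0;1;0;0;1;0;0;1;1;1;1];
      [:: 0;1;0;0;0;1;0;1;1;1;1];
      [:: 0;-1;0;0;0;0;1;-1;-1;-1;-1];
      [:: 0;-1;0;0;0;0;0;-1;0;0;0];
      [:: 0;0;-1;1;0;0;0;0;-1;0;0];
      [:: 0;-1;1;0;0;0;0;0;0;-1;0];
      [:: 0;0;0;-1;0;0;0;0;0;0;-1] ]%Z.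

Definition A_b : 'M[Z2]_11 := mx_of_rows
  [:: [:: 1;0;0;0;0;0;0;0;0;0;0];
      [:: 0;1;0;0;0;0;0;0;0;0;0];
      [:: 0;0;1;0;0;0;0;0;0;0;0];
      [:: 0;0;0;1;0;0;0;0;0;0;0];
      [:: 0;0;0;1;0;1;0;0;0;1;1];
      [:: 0;1;-1;0;1;0;0;0;0;1;1];
      [:: 1;0;1;-1;-1;-1;-1;0;0;-1;-1];
      [:: 0;0;0;0;0;0;0;1;0;0;0];
      [:: 0;0;0;0;0;0;0;0;1;0;0];
      [:: 0;-1;1;0;0;0;0;0;0;-1;0];
      [:: 0;0;0;-1;0;0;0;0;0;0;-1] ]%Z.

Definition A_c : 'M[Z2]_11 := mx_of_rows
  [:: [:: 1;0;0;0;0;0;0;0;0;0;0];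
      [:: 0;1;0;0;0;0;0;0;0;0;0];
      [:: 0;0;1;0;0;0;0;0;0;0;0];
      [:: 0;0;0;1;0;0;0;0;0;0;0];
      [:: 0;0;0;1;0;0;1;-1;0;-1;0];
      [:: 1;1;0;0;-1;-1;-1;-1;0;-1;0];
      [:: 0;0;0;-1;1;0;0;1;0;1;0];
      [:: 0;0;0;0;0;0;0;1;0;0;0];
      [:: 0;0;-1;1;0;0;0;0;-1;0;0];
      [:: 0;0;0;0;0;0;0;0;0;1;0];
      [:: 0;0;0;-1;0;0;0;0;0;0;-1] ]%Z.

(* Main.v *)
Require Import Defs.
From HB Require Import structures.
From mathcomp Require Import all_boot all_order all_algebra all_fingroup.
Set Implicit Arguments. Unset Strict Implicit. Unset Printing Implicit Defensive.
Import GRing.Theory.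
Local Open Scope ring_scope.

Definition lget (s : seq (seq int)) i j : int := nth 0 (nth [::] s i) j.
Definition mxl m n (s : seq (seq int)) : 'M[Z2]_(m, n) :=
  \matrix_(i < m, j < n) ((lget s i j)%:~R).
Definition lmul (m k n : nat) (s t : seq (seq int)) : seq (seq int) :=
  mkseq (fun i => mkseq (fun j =>
     foldr (fun l acc => lget s i l * lget t l j + acc) 0%R (iota 0 k)) n) m.
Definition ladd (m n : nat) (s t : seq (seq int)) : seq (seq int) :=
  mkseq (fun i => mkseq (fun j => lget s i j + lget t i j) n) m.
Definition lid (m : nat) : seq (seq int) :=
  mkseq (fun i => mkseq (fun j => ((i == j) : nat)%:Z) m) m.

Lemma mx_of_rowsE s : mx_of_rows s = mxl 11 11 s.
Proof. by []. Qed.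

Lemma foldr_sum (F : nat -> int) k :
  foldr (fun l acc => F l + acc) 0 (iota 0 k) = \sum_(l < k) F l.
Proof.
by rewrite -(big_mkord xpredT) /index_iota subn0 unlock /reducebig.
Qed.

Lemma mxl_mul m k n s t : mxl m k s *m mxl k n t = mxl m n (lmul m k n s t).
Proof.
apply/matrixP => i j; rewrite !mxE /lmul /lget !nth_mkseq //.
rewrite (foldr_sum (fun l => nth 0 (nth [::] s i) l * nth 0 (nth [::] t l) j)).
rewrite rmorph_sum /=; apply: eq_bigr => l _; rewrite !mxE rmorphM.
by [].
Qed.

Lemma mxl_add m n s t : mxl m n s + mxl m n t = mxl m n (ladd m n s t).
Proof.
by apply/matrixP => i j; rewrite !mxE /ladd /lget !nth_mkseq // rmorphD.
Qed.

Lemma mxl_id m : 1%:M = mxl m m (lid m).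
Proof.
apply/matrixP => i j; rewrite !mxE /lid /lget !nth_mkseq //.
Qed.
Definition Anl : seq (seq int) :=
  [:: [:: 1;0;0;0;0;0;0;0;0;0;0];
  [:: 0;1;0;0;0;0;0;0;0;0;0];
  [:: 0;0;1;0;0;0;0;0;0;0;0];
  [:: 0;0;0;1;0;0;0;0;0;0;0];
  [:: 0;1;0;0;1;0;0;1;1;1;1];
  [:: 0;1;0;0;0;1;0;1;1;1;1];
  [:: 0;-1;0;0;0;0;1;-1;-1;-1;-1];
  [:: 0;-1;0;0;0;0;0;-1;0;0;0];
  [:: 0;0;-1;1;0;0;0;0;-1;0;0];
  [:: 0;-1;1;0;0;0;0;0;0;-1;0];
  [:: 0;0;0;-1;0;0;0;0;0;0;-1]]%Z.

Definition Abl : seq (seq int) :=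
  [:: [:: 1;0;0;0;0;0;0;0;0;0;0];
  [:: 0;1;0;0;0;0;0;0;0;0;0];
  [:: 0;0;1;0;0;0;0;0;0;0;0];
  [:: 0;0;0;1;0;0;0;0;0;0;0];
  [:: 0;0;0;1;0;1;0;0;0;1;1];
  [:: 0;1;-1;0;1;0;0;0;0;1;1];
  [:: 1;0;1;-1;-1;-1;-1;0;0;-1;-1];
  [:: 0;0;0;0;0;0;0;1;0;0;0];
  [:: 0;0;0;0;0;0;0;0;1;0;0];
  [:: 0;-1;1;0;0;0;0;0;0;-1;0];
  [:: 0;0;0;-1;0;0;0;0;0;0;-1]]%Z.

Definition Acl : seq (seq int) :=
  [:: [:: 1;0;0;0;0;0;0;0;0;0;0];
  [:: 0;1;0;0;0;0;0;0;0;0;0];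
  [:: 0;0;1;0;0;0;0;0;0;0;0];
  [:: 0;0;0;1;0;0;0;0;0;0;0];
  [:: 0;0;0;1;0;0;1;-1;0;-1;0];
  [:: 1;1;0;0;-1;-1;-1;-1;0;-1;0];
  [:: 0;0;0;-1;1;0;0;1;0;1;0];
  [:: 0;0;0;0;0;0;0;1;0;0;0];
  [:: 0;0;-1;1;0;0;0;0;-1;0;0];
  [:: 0;0;0;0;0;0;0;0;0;1;0];
  [:: 0;0;0;-1;0;0;0;0;0;0;-1]]%Z.

Definition psiL : seq (seq int) :=
  [:: [:: 0;0;0;1;1;1;1];
  [:: 0;0;-2;-2;-2;-2;-2];
  [:: 0;-2;-2;-2;-2;-2;-2];
  [:: -2;-2;0;-2;-2;-2;-2];
  [:: -1;-1;-1;-2;-2;-2;-1];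
  [:: 0;1;-1;-1;-1;0;-1];
  [:: 1;0;0;1;2;1;1];
  [:: 0;0;1;1;1;1;1];
  [:: -1;0;1;0;0;0;0];
  [:: 0;-1;0;0;0;0;0];
  [:: 1;1;0;1;1;1;1]]%Z.

Definition LL : seq (seq int) :=
  [:: [:: -1;0;0;0;0;0;0;1;-1;0;0];
  [:: 0;0;0;0;0;0;0;0;0;-1;0];
  [:: -1;0;0;0;0;0;0;1;0;0;0];
  [:: 1;0;0;0;-1;-1;-1;-2;0;0;0];
  [:: 0;0;0;0;0;0;1;-1;1;0;0];
  [:: 0;0;0;0;0;1;0;1;0;1;0];
  [:: 0;0;0;0;1;0;0;2;-1;-1;0]]%Z.

Definition RL : seq (seq int) :=
  [:: [:: 0;0;0;0;0;0;0;0;0;0;0];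
  [:: 0;0;0;0;0;0;0;-1;0;0;0];
  [:: 0;0;0;0;0;0;0;-1;0;1;0];
  [:: 0;0;0;0;0;0;0;-1;1;1;0];
  [:: 0;0;0;0;0;0;0;0;0;0;0];
  [:: 0;0;0;0;0;0;0;0;0;0;0];
  [:: 0;0;0;0;0;0;0;0;0;0;0];
  [:: 0;0;0;0;0;0;0;0;0;0;0];
  [:: 0;0;0;0;0;0;0;0;0;0;0];
  [:: 0;0;0;0;0;0;0;0;0;0;0];
  [:: 0;0;0;0;1;0;0;1;0;0;0]]%Z.

Definition phiL : seq (seq int) :=
  [:: [:: -1;-1;-1;0;0;0;0;0;0;0;0];
  [:: -1;-1;-1;-1;-1;-1;0;-1;-1;-1;-1];
  [:: -2;-2;0;-2;1;1;0;1;1;1;1];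
  [:: -1;-1;-1;-1;-1;0;-1;0;0;0;0];
  [:: -2;-1;-2;-1;1;0;1;0;0;0;0];
  [:: -1;-1;-1;-1;0;-1;-1;0;0;0;0];
  [:: -2;-2;-1;0;0;1;1;0;0;0;0]]%Z.

Definition SL : seq (seq int) :=
  [:: [:: 14;3;3;-1;-1;-7;-7];
  [:: -9;-2;-2;1;1;4;4];
  [:: -6;-1;-1;0;0;3;3];
  [:: -3;-1;-1;0;0;2;2];
  [:: 4;1;1;-1;0;-2;-2];
  [:: 4;1;1;0;0;-3;-2];
  [:: 0;0;0;0;0;0;0];
  [:: -4;-2;-1;1;0;3;2];
  [:: 0;0;0;0;0;0;0];
  [:: 0;0;0;0;0;0;0];
  [:: 0;0;0;0;0;0;0]]%Z.

Definition TL : seq (seq int) :=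
  [:: [:: 0;0;0;0;0;0;0;0;0;0;0];
  [:: 0;0;0;0;0;0;0;0;1;1;1];
  [:: 0;0;0;0;0;0;0;0;1;0;1];
  [:: 0;0;0;0;0;0;0;0;0;0;1];
  [:: 0;0;0;0;0;0;0;0;0;0;0];
  [:: 0;0;0;0;0;0;0;0;0;0;0];
  [:: 0;0;0;0;0;0;0;0;0;0;0];
  [:: 0;0;0;0;0;0;1;0;-1;-1;-1];
  [:: 0;0;0;0;0;0;0;0;0;0;0];
  [:: 0;0;0;0;0;0;0;0;0;0;0];
  [:: 0;0;0;0;0;0;0;0;0;0;0]]%Z.

Definition ML : seq (seq int) :=
  [:: [:: 4;0;0;0;0;0;0;0;0;0;0];
  [:: 0;4;0;0;0;0;0;0;0;0;0];
  [:: 0;0;4;0;0;0;0;0;0;0;0];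
  [:: 0;0;0;4;0;0;0;0;0;0;0];
  [:: 1;2;0;2;0;0;0;0;0;0;0];
  [:: 1;4;-2;0;0;0;0;0;0;0;0];
  [:: 1;-2;2;-2;0;0;0;0;0;0;0];
  [:: 0;-2;0;0;0;0;0;0;0;0;0];
  [:: 0;0;-2;2;0;0;0;0;0;0;0];
  [:: 0;-2;2;0;0;0;0;0;0;0;0];
  [:: 0;0;0;-2;0;0;0;0;0;0;0]]%Z.

Lemma A_nE : A_n = mxl 11 11 Anl. Proof. by []. Qed.
Lemma A_bE : A_b = mxl 11 11 Abl. Proof. by []. Qed.
Lemma A_cE : A_c = mxl 11 11 Acl. Proof. by []. Qed.


Section MkPerm.
Variables (m : nat) (l : seq nat).
Definition pg (i : nat) : nat := nth 0 l i %% m.+1.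
Hypothesis H : all (fun i => pg (pg i) == i) (iota 0 m.+1).
Definition pf (i : 'I_m.+1) : 'I_m.+1 := Ordinal (ltn_pmod (nth 0 l i) (ltn0Sn m)).
Lemma pf_invol : involutive pf.
Proof.
move=> i; apply: val_inj => /=.
have := allP H i; rewrite mem_iota add0n ltn_ord /pg => /(_ isT) /eqP.
by [].
Qed.
Definition mkperm : 'S_m.+1 := perm (can_inj pf_invol).
Definition plist : seq (seq int) :=
  mkseq (fun i => mkseq (fun j => ((pg i == j) : nat)%:Z) m.+1) m.+1.
Lemma perm_mx_mkperm : perm_mx mkperm = mxl m.+1 m.+1 plist.
Proof.
apply/matrixP => i j; rewrite !mxE /plist /lget !nth_mkseq // permE.
by [].
Qed.
End MkPerm.

Definition sbF : 'S_7 := @mkperm 6 [:: 0;1;2;4;3;6;5]%N (erefl true).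
Definition scF : 'S_7 := @mkperm 6 [:: 0;1;2;5;6;3;4]%N (erefl true).
Definition sbC : 'S_7 := @mkperm 6 [:: 0;1;2;4;3;6;5]%N (erefl true).
Definition scC : 'S_7 := @mkperm 6 [:: 0;2;1;3;4;6;5]%N (erefl true).

Ltac lcomp := congr mxl; vm_compute; reflexivity.

Lemma partA : C2cube_action A_n A_b A_c.
Proof.
by split; split; rewrite ?A_nE ?A_bE ?A_cE !mxl_mul ?(mxl_id 11); lcomp.
Qed.

Lemma partB : fixed_is_perm A_n A_b A_c.
Proof.
exists 7, (mxl 11 7 psiL), sbF, scF; split.
- move=> v Hv.
  have e: mxl 7 11 LL *m mxl 11 7 psiL = 1%:M.
    by rewrite mxl_mul (mxl_id 7); lcomp.
  by rewrite -[v]mul1mx -e -mulmxA Hv mulmx0.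
- move=> u; split.
  + move=> Hu; exists (mxl 7 11 LL *m u).
    have e: mxl 11 7 psiL *m mxl 7 11 LL + mxl 11 11 RL *m A_n
            = 1%:M + mxl 11 11 RL.
      by rewrite A_nE !mxl_mul (mxl_id 11) !mxl_add; lcomp.
    have := congr1 (mulmx^~ u) e.
    rewrite /= !mulmxDl -!mulmxA Hu mul1mx.
    by move/addIr => ->.
  + case=> v ->; rewrite mulmxA; congr (_ *m v).
    by rewrite A_nE mxl_mul; lcomp.
- by rewrite /sbF perm_mx_mkperm A_bE !mxl_mul; lcomp.
- by rewrite /scF perm_mx_mkperm A_cE !mxl_mul; lcomp.
Qed.

Lemma partC : coinv_is_perm A_n A_b A_c.
Proof.
exists 7, (mxl 7 11 phiL), sbC, scC; split.
- move=> v; exists (mxl 11 7 SL *m v).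
  have e: mxl 7 11 phiL *m mxl 11 7 SL = 1%:M.
    by rewrite mxl_mul (mxl_id 7); lcomp.
  by rewrite mulmxA e mul1mx.
- move=> u; split.
  + move=> Hu; exists (mxl 11 11 TL *m u).
    have e: mxl 11 7 SL *m mxl 7 11 phiL + mxl 11 11 TL
            = 1%:M + A_n *m mxl 11 11 TL.
      by rewrite A_nE !mxl_mul (mxl_id 11) !mxl_add; lcomp.
    have eq := congr1 (mulmx^~ u) e.
    rewrite /= !mulmxDl -!mulmxA Hu mulmx0 add0r mul1mx in eq.
    by rewrite mulmxBl mul1mx {1}eq addrK.
  + case=> w ->; rewrite mulmxA mulmxBr mulmx1.
    have e: mxl 7 11 phiL *m A_n = mxl 7 11 phiL.
      by rewrite A_nE mxl_mul; lcomp.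
    by rewrite e subrr mul0mx.
- by rewrite /sbC perm_mx_mkperm A_bE !mxl_mul; lcomp.
- by rewrite /scC perm_mx_mkperm A_cE !mxl_mul; lcomp.
Qed.
Local Close Scope ring_scope.
Definition E := (bool * bool * bool)%type.
Definition eadd (e f : E) : E := ((e.1.1 (+) f.1.1, e.1.2 (+) f.1.2), e.2 (+) f.2).
Definition e0 : E := ((false, false), false).

Lemma eaddC e f : eadd e f = eadd f e.
Proof. by case: e => [[[] []] []]; case: f => [[[] []] []]. Qed.
Lemma eaddee e : eadd e e = e0.
Proof. by case: e => [[[] []] []]. Qed.

Lemma witness_ok g : g != e0 -> exists h k,
   pairwise (fun e f => (eadd e f != e0) && (eadd e f != g)) [:: e0; h; k; eadd h k].
Proof.
pose n : E := ((true, false), false); pose b : E := ((false, true), false);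
pose c : E := ((false, false), true).
case: g => [[[] []] []] gne;
 [exists n, b | exists c, n | exists n, b | exists c, b | exists n, b | exists c, n
 | exists n, b | by move: gne]; by [].
Qed.

Lemma sumb_card (I : finType) (P : pred I) : \sum_(i : I) (P i : nat) = #|P|.
Proof. rewrite -sum1_card [RHS]big_mkcond. apply: eq_bigr => i _. rewrite unfold_in. by case: (P i). Qed.

Lemma sumE (F : E -> nat) : \sum_(e : E) F e =
  F ((true,true),true) + F ((true,true),false) + F ((true,false),true)
  + F ((true,false),false) + F ((false,true),true) + F ((false,true),false)
  + F ((false,false),true) + F ((false,false),false).
Proof.
rewrite (eq_bigr (fun p => F (p.1, p.2))); last by case.
rewrite -(pair_bigA _ (fun a b => F (a, b))) /=.
rewrite (eq_bigr (fun p => \sum_j F ((p.1, p.2), j))); last by case.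
rewrite -(pair_bigA _ (fun a b => \sum_j F ((a, b), j))) /= !big_bool /=.
by rewrite !addnA.
Qed.

Section Comb.
Variables (T : finType) (sn sb sc : T -> T).
Hypotheses (Hnb : forall x, sn (sb x) = sb (sn x)) (Hnc : forall x, sn (sc x) = sc (sn x))
  (Hbc : forall x, sb (sc x) = sc (sb x)) (Hn : forall x, sn (sn x) = x)
  (Hb : forall x, sb (sb x) = x) (Hc : forall x, sc (sc x) = x).

Definition act (e : E) (x : T) : T :=
  (if e.2 then sc else id) ((if e.1.2 then sb else id) ((if e.1.1 then sn else id) x)).

Lemma act_add e f x : act e (act f x) = act (eadd e f) x.
Proof.
case: e => [[[] []] []]; case: f => [[[] []] []]; rewrite /act /=;
  do ?[rewrite Hnb | rewrite Hnc | rewrite Hbc | rewrite Hn | rewrite Hb | rewrite Hc].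
all: by [].
Qed.

Lemma act0 x : act e0 x = x. Proof. by []. Qed.

Lemma comb : #|T| = 11 ->
  (forall e, e != e0 -> \sum_(x : T) ((act e x == x) : nat) = 3) ->
  (forall x, ~~ odd (\sum_(e : E) ((act e x == x) : nat))) -> False.
Proof.
move=> cardT Hfix Hev.
pose c x := \sum_(e : E) ((act e x == x) : nat).
have tot : \sum_(x : T) c x = 32.
  rewrite /c exchange_big /= sumE.
  have -> : \sum_(x : T) ((act ((false,false),false) x == x) : nat) = 11.
    rewrite -cardT -sumb_card; apply: eq_bigr => x _.
    by rewrite [act _ _]act0 eqxx.
  by rewrite !Hfix.
have [x cx4] : exists x, c x < 4.
  case: (pickP (fun x => c x < 4)) => [x Hx | H]; first by exists x.
  have : \sum_(x : T) 4 * (predT x : nat) <= \sum_(x : T) c x.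
    by apply: leq_sum => x _; rewrite /= muln1 leqNgt H.
  by rewrite -big_distrr (sumb_card (@predT T)) cardT tot.
have c1 : 1 <= c x by rewrite /c sumE act0 eqxx addn1.
have c2 : c x = 2.
  move: cx4 c1 (Hev x); rewrite -/(c x).
  by case: (c x) => [|[|[|[|n]]]].
have [g [gne Sg]] : exists g, g != e0 /\ forall e, (act e x == x) = (e == e0) || (e == g).
  have : #|[set e | act e x == x]| == 2.
    apply/eqP; rewrite -sum1dep_card -c2 /c big_mkcond /=.
    by apply: eq_bigr => e _; case: (act e x == x).
  case/cards2P => y [z [yz Seq]].
  have : e0 \in [set e | act e x == x] by rewrite inE act0.
  rewrite Seq !inE => /orP [/eqP y0 | /eqP z0].
  - exists z; split; first by rewrite y0 eq_sym.
    move=> e; have := Seq; move/setP/(_ e); rewrite !inE => ->.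
    by rewrite y0.
  - exists y; split; first by rewrite z0.
    move=> e; have := Seq; move/setP/(_ e); rewrite !inE => ->.
    by rewrite z0 orbC.
have gx : act g x = x by apply/eqP; rewrite Sg eqxx orbT.
have neq : forall e f, (eadd e f != e0) && (eadd e f != g) -> act e x != act f x.
  move=> e f /andP [h1 h2]; apply/eqP => H.
  have : act (eadd e f) x == x by rewrite -act_add -H act_add eaddee act0.
  by rewrite Sg (negbTE h1) (negbTE h2).
have fixg : forall e, act g (act e x) = act e x.
  by move=> e; rewrite act_add eaddC -act_add gx.
have [h [k pw]] := witness_ok gne.
set L := [:: e0; h; k; eadd h k] in pw.
have U : uniq (map (act^~ x) L).
  rewrite uniq_pairwise pairwise_map.
  by apply: sub_pairwise pw => a b /neq.
have : #|map (act^~ x) L| <= #|[pred y | act g y == y]|.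
  apply: subset_leq_card; apply/subsetP => y /mapP [e _ ->].
  by rewrite inE /= fixg.
by rewrite (card_uniqP U) -sumb_card Hfix.
Qed.
End Comb.
Local Open Scope ring_scope.

Lemma z2vD (a b : Z2) k : z2v (a + b) k = ((z2v a k + z2v b k) %% 2 ^ k)%N.
Proof. by []. Qed.

Lemma z2v_nat n k : z2v (n%:R : Z2) k = (n %% 2 ^ k)%N.
Proof.
elim: n => [|n IH]; first by [].

by rewrite mulrS z2vD IH /= modnDm.
Qed.

Lemma nat_z2_inj m n : (m%:R : Z2) = n%:R -> (m < 32)%N -> (n < 32)%N -> m = n.
Proof.
move=> e hm hn; have h : z2v (m%:R : Z2) 5 = z2v (n%:R : Z2) 5 by rewrite e.
by rewrite !z2v_nat !modn_small in h.
Qed.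

Lemma z2_even m (y : Z2) : (m%:R : Z2) = y + y -> ~~ odd m.
Proof.
move=> e; have h : z2v (m%:R : Z2) 1 = z2v (y + y) 1 by rewrite e.
rewrite z2v_nat z2vD addnn !modn2 odd_double in h.
by apply/negP => o; rewrite o in h.
Qed.

Definition ltr n (s : seq (seq int)) : int :=
  foldr (fun i acc => lget s i i + acc) 0 (iota 0 n).

Lemma mxl_tr n s : \tr (mxl n n s) = (ltr n s)%:~R.
Proof.
rewrite /ltr (foldr_sum (fun i => lget s i i)) rmorph_sum /mxtrace.
by apply: eq_bigr => i _; rewrite mxE.
Qed.

Lemma trace_perm n (s : 'S_n) : \tr (perm_mx s) = (\sum_i ((s i == i) : nat))%:R :> Z2.
Proof. by rewrite /mxtrace natr_sum; apply: eq_bigr => i _; rewrite /perm_mx !mxE. Qed.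

Lemma perm_mx_eq n (s t : 'S_n) : perm_mx s = perm_mx t :> 'M[Z2]_n ->
  forall x, s x = t x.
Proof.
move=> e x; have := congr1 (fun M : 'M[Z2]_n => M x (s x)) e.
rewrite /perm_mx !mxE eqxx; case: (t x =P s x) => // _ /eqP.
by rewrite oner_eq0.
Qed.

Lemma sumEV (V : zmodType) (F : E -> V) : \sum_(e : E) F e =
  F ((true,true),true) + F ((true,true),false) + F ((true,false),true)
  + F ((true,false),false) + F ((false,true),true) + F ((false,true),false)
  + F ((false,false),true) + F ((false,false),false).
Proof.
rewrite (eq_bigr (fun p => F (p.1, p.2))); last by case.
rewrite -(pair_bigA _ (fun a b => F (a, b))) /=.
rewrite (eq_bigr (fun p => \sum_j F ((p.1, p.2), j))); last by case.
rewrite -(pair_bigA _ (fun a b => \sum_j F ((a, b), j))) /= !big_bool /=.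
by rewrite !addrA.
Qed.

Definition Ae (e : E) : 'M[Z2]_11 :=
  (if e.1.1 then A_n else 1%:M) *m (if e.1.2 then A_b else 1%:M)
     *m (if e.2 then A_c else 1%:M).
Definition Ael (e : E) : seq (seq int) :=
  lmul 11 11 11 (lmul 11 11 11 (if e.1.1 then Anl else lid 11)
     (if e.1.2 then Abl else lid 11)) (if e.2 then Acl else lid 11).

Lemma mxl_if (b : bool) (A : 'M[Z2]_11) s : A = mxl 11 11 s ->
  (if b then A else 1%:M) = mxl 11 11 (if b then s else lid 11).
Proof. by case: b => // _; rewrite (mxl_id 11). Qed.

Lemma AeE e : Ae e = mxl 11 11 (Ael e).
Proof.
by rewrite /Ae /Ael -!mxl_mul -(mxl_if _ A_nE) -(mxl_if _ A_bE) -(mxl_if _ A_cE).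
Qed.

Lemma Ae_tr e : e != e0 -> ltr 11 (Ael e) = 3%:Z.
Proof. by case: e => [[[] []] []] // _; vm_compute; reflexivity. Qed.

Lemma Ae_sum : \sum_(e : E) Ae e = mxl 11 11 ML + mxl 11 11 ML.
Proof.
rewrite sumEV !AeE !mxl_add; congr mxl; vm_compute; reflexivity.
Qed.

Lemma partD : ~ is_perm_module3 A_n A_b A_c.
Proof.
case=> P [Q [sn [sb [sc [PQ QP Hn Hb Hc]]]]].
have cj : forall A s, A *m P = P *m perm_mx s -> Q *m A *m P = perm_mx s.
  by move=> A s H; rewrite -mulmxA H mulmxA QP mul1mx.
have cjM : forall A B, Q *m (A *m B) *m P = (Q *m A *m P) *m (Q *m B *m P).
  by move=> A B; rewrite -!mulmxA (mulmxA P) PQ mul1mx.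
have cj1 : Q *m 1%:M *m P = 1%:M by rewrite mulmx1 QP.
have [[nn bb cc] [nb nc bc]] := partA.
have pn := cj _ _ Hn; have pb := cj _ _ Hb; have pc := cj _ _ Hc.
have inv : forall (s : 'S_11) A, A *m A = 1%:M -> Q *m A *m P = perm_mx s ->
    forall x, s (s x) = x.
  move=> s A AA e x.
  have : perm_mx (s * s)%g = perm_mx 1%g :> 'M[Z2]_11.
    by rewrite perm_mxM -e -cjM AA cj1 perm_mx1.
  by move/perm_mx_eq/(_ x); rewrite permM perm1.
have com : forall (s t : 'S_11) A B, A *m B = B *m A ->
    Q *m A *m P = perm_mx s -> Q *m B *m P = perm_mx t -> forall x, s (t x) = t (s x).
  move=> s t A B AB es et x.
  have : perm_mx (s * t)%g = perm_mx (t * s)%g :> 'M[Z2]_11.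
    by rewrite !perm_mxM -es -et -!cjM AB.
  by move/perm_mx_eq/(_ x); rewrite !permM.
pose se (e : E) : 'S_11 := ((if e.1.1 then sn else 1) * (if e.1.2 then sb else 1)
   * (if e.2 then sc else 1))%g.
have seE : forall e x, se e x = act sn sb sc e x.
  by move=> [[[] []] []] x; rewrite /se /act /= !permM ?perm1.
have cjif : forall (b : bool) A (s : 'S_11), Q *m A *m P = perm_mx s ->
    Q *m (if b then A else 1%:M) *m P = perm_mx (if b then s else 1%g).
  by move=> [] A s // _; rewrite cj1 perm_mx1.
have cjE : forall e, Q *m Ae e *m P = perm_mx (se e).
  move=> e; rewrite /Ae /se !cjM !perm_mxM.
  by rewrite (cjif _ _ _ pn) (cjif _ _ _ pb) (cjif _ _ _ pc).
apply: (@comb _ sn sb sc).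
- exact: (com _ _ _ _ nb pn pb).
- exact: (com _ _ _ _ nc pn pc).
- exact: (com _ _ _ _ bc pb pc).
- exact: (inv _ _ nn pn).
- exact: (inv _ _ bb pb).
- exact: (inv _ _ cc pc).
- by rewrite card_ord.
- move=> e ne.
  have tr : (\sum_(x : 'I_11) ((se e x == x) : nat))%:R = (3%:R : Z2).
    rewrite -trace_perm -cjE mxtrace_mulC mulmxA PQ mul1mx AeE mxl_tr Ae_tr //.
  have bnd : (\sum_(x : 'I_11) ((se e x == x) : nat) <= 11)%N.
    apply: (@leq_trans (\sum_(x : 'I_11) 1)%N); first by apply: leq_sum => x _; case: (_ == _).
    by rewrite sum1_card card_ord.
  have h := nat_z2_inj tr (leq_ltn_trans bnd (isT : (11 < 32)%N)) isT.
  apply: (etrans _ h).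
  by apply: eq_bigr => x _; rewrite seE.
- move=> x.
  have e1 : Q *m (\sum_(e : E) Ae e) *m P = \sum_(e : E) perm_mx (se e).
    rewrite mulmx_sumr mulmx_suml; apply: eq_bigr => e _; exact: cjE.
  rewrite Ae_sum mulmxDr mulmxDl in e1.
  have := congr1 (fun M : 'M[Z2]_11 => M x x) e1.
  rewrite /= mxE summxE => e2.
  apply: (@z2_even _ ((Q *m mxl 11 11 ML *m P) x x)).
  rewrite e2 natr_sum; apply: eq_bigr => e _.
  by rewrite /perm_mx !mxE seE.
Qed.

Theorem mainTheorem12 :
  [/\ C2cube_action A_n A_b A_c,
      fixed_is_perm A_n A_b A_c,
      coinv_is_perm A_n A_b A_c
    & ~ is_perm_module3 A_n A_b A_c].
Proof. split; [exact: partA | exact: partB | exact: partC | exact: partD]. Qed.
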